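(* Let $n\geq 2$. Every cluster of $n$-permutations contains exactly one pair of twin permutations (i.e., exactly one unordered pair $\{\pi,\sigma\}$ of twins with both $\pi$ and $\sigma$ in the cluster).
   Context: An $n$-permutation is a permutation $\pi_1\cdots\pi_n$ of $\{1,\ldots,n\}$. For a word $w$ of distinct numbers, $\mathrm{red}(w)$ is the permutation obtained by replacing the $i$-th smallest letter by $i$. For an $(n-1)$-permutation $\tau$, the cluster with signature $\tau$ is the set of all $n$-permutations $\pi$ with $\mathrm{red}(\pi_1\cdots\pi_{n-1})=\tau$; there are $(n-1)!$ clusters, each with $n$ elements. Two different $n$-permutations $\pi=\pi_1\cdots\pi_n$ and $\sigma=\sigma_1\cdots\sigma_n$ are twins if $\mathrm{red}(\pi_1\cdots\pi_{n-1})=\mathrm{red}(\sigma_1\cdots\sigma_{n-1})$ and $|\pi_n-\pi_1|=|\sigma_n-\sigma_1|=1$. *)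

(* Defs.v *)
From mathcomp Require Import all_boot all_fingroup.
Set Implicit Arguments. Unset Strict Implicit. Unset Printing Implicit Defensive.

(* An n-permutation pi_1 ... pi_n of {1,...,n}, as the word of its values.
   A permutation p : 'S_n acts on 'I_n = {0,...,n-1}; we shift by one. *)
Definition pword n (p : 'S_n) : seq nat := [seq (p i).+1 | i <- enum 'I_n].

(* red w : replace the i-th smallest letter of w by i (w of distinct numbers):
   the rank of x in w is the number of letters of w that are <= x. *)
Definition red (w : seq nat) : seq nat := [seq count (fun y => y <= x) w | x <- w].

Definition cluster n (tau : 'S_(n.-1)) : {set 'S_n} :=
  [set pi : 'S_n | red (take n.-1 (pword pi)) == pword tau].

Definition ends_adjacent n (p : 'S_n) : bool :=
  let w := pword p in
  let a := nth 0 w 0 in let b := nth 0 w n.-1 in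
  (a == b.+1) || (b == a.+1).

Definition twins n (p s : 'S_n) : bool :=
  [&& p != s,
      red (take n.-1 (pword p)) == red (take n.-1 (pword s)),
      ends_adjacent p & ends_adjacent s].

Definition twin_pairs_in n (tau : 'S_(n.-1)) : {set {set 'S_n}} :=
  [set P : {set 'S_n} | [&& #|P| == 2, P \subset cluster tau &
     [forall p in P, forall s in P, (p != s) ==> twins p s]]].

(* Main.v *)
Require Import Defs.
From mathcomp Require Import all_boot all_fingroup zify.

Lemma cnt m (a : pred 'I_m) : count a (enum 'I_m) = \sum_(i < m) a i.
Proof. by rewrite -sum1_count big_mkcond /= -big_enum /=. Qed.

Lemma sum_le N x : \sum_(i < N) (i <= x) = minn N x.+1.
Proof.
elim: N => [|N IH]; first by rewrite big_ord0.
rewrite big_ord_recr /= IH; case: leqP => H; lia.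
Qed.

Lemma sum_perm N (p : 'S_N) x : \sum_(i<N) (p i <= x) = \sum_(i<N) (i <= x).
Proof. by rewrite [RHS](reindex_inj (@perm_inj _ p)). Qed.

Lemma red_map m (F : 'I_m -> nat) :
  red (map F (enum 'I_m)) = map (fun j => \sum_(i<m) (F i <= F j)) (enum 'I_m).
Proof. by rewrite /red -map_comp; apply: eq_map => j /=; rewrite count_map cnt. Qed.

Section S.
Variable k : nat.
Variable tau : 'S_k.+1.
Notation W j := (widen_ord (leqnSn k.+1) j : 'I_k.+2).

Lemma take_pword (p : 'S_k.+2) :
  take k.+1 (pword p) = [seq (p (W j)).+1 | j <- enum 'I_k.+1].
Proof.
rewrite /pword enum_ordSr map_rcons -map_comp -cats1 take_size_cat //.
by rewrite size_map size_enum_ord.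
Qed.

Lemma clusterP (p : 'S_k.+2) :
  reflect (forall j, \sum_(i<k.+1) (p (W i) <= p (W j)) = (tau j).+1)
          (p \in @cluster k.+2 tau).
Proof.
rewrite inE /= take_pword red_map /pword.
apply: (iffP eqP) => [/eq_in_map H j | H].
  by have /= [] := H j (mem_enum _ _).
by apply/eq_in_map => j _ /=; rewrite -H.
Qed.

Lemma sum_split (p : 'S_k.+2) x :
  \sum_(i<k.+2) (p i <= x) = \sum_(i<k.+1)(p (W i) <= x) + (p ord_max <= x).
Proof. by rewrite big_ord_recr. Qed.

Lemma cluster_eq (p : 'S_k.+2) j : p \in @cluster k.+2 tau -> p (W j) = lift (p ord_max) (tau j).
Proof.
move/clusterP => H; apply: val_inj => /=.
have := sum_split p (p (W j)); rewrite H sum_perm sum_le.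
have : p ord_max != p (W j).
  by rewrite (inj_eq perm_inj); apply/eqP => /(congr1 val) /=; have := ltn_ord j; lia.
rewrite /bump; move: (p ord_max) (p (W j)) (tau j) => a b c.
have := ltn_ord b; rewrite -(inj_eq val_inj) /=; case: leqP; case: leqP => /=; lia.
Qed.

Definition pvf (v i : 'I_k.+2) : 'I_k.+2 :=
  if unlift ord_max i is Some j then lift v (tau j) else v.

Lemma pvf_inj v : injective (pvf v).
Proof.
move=> x y; rewrite /pvf.
case: (unliftP ord_max x) => [i -> |->]; case: (unliftP ord_max y) => [j -> |->];
  rewrite ?liftK ?unlift_none //.
- by move/lift_inj/perm_inj ->.
- by move=> E; have := neq_lift v (tau i); rewrite E eqxx.
- by move=> E; have := neq_lift v (tau j); rewrite -E eqxx.
Qed.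

Definition pv v := perm (pvf_inj v).

Lemma pv_max v : pv v ord_max = v.
Proof. by rewrite permE /pvf unlift_none. Qed.

Lemma W_lift (j : 'I_k.+1) : W j = lift ord_max j.
Proof. by apply: val_inj => /=; rewrite /bump leqNgt ltn_ord. Qed.

Lemma pv_W v j : pv v (W j) = lift v (tau j).
Proof. by rewrite permE /pvf W_lift liftK. Qed.

Lemma pv_cluster v : pv v \in @cluster k.+2 tau.
Proof.
apply/clusterP => j.
under eq_bigr => i _ do rewrite !pv_W leq_bump2.
by rewrite sum_perm sum_le; apply/minn_idPr; exact: ltn_ord. Qed.

Lemma cluster_pv (p : 'S_k.+2) : p \in @cluster k.+2 tau -> p = pv (p ord_max).
Proof.
move=> Hp; apply/permP => i.
case: (unliftP ord_max i) => [j -> | ->]; last by rewrite pv_max.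
by rewrite -W_lift pv_W cluster_eq.
Qed.


Lemma ends_eq (p : 'S_k.+2) : ends_adjacent p =
  (p ord0 == (p ord_max).+1 :> nat) || (p ord_max == (p ord0).+1 :> nat).
Proof.
have h : forall i : 'I_k.+2, nth 0 (pword p) i = (p i).+1.
  by move=> i; rewrite /pword (nth_map ord0) ?size_enum_ord ?nth_ord_enum.
rewrite /ends_adjacent (h ord0) (h ord_max).
by rewrite !eqSS.
Qed.

Lemma W0 : W ord0 = ord0. Proof. exact: val_inj. Qed.

Definition ta : 'I_k.+2 := W (tau ord0).
Definition tb : 'I_k.+2 := lift ord0 (tau ord0).

Definition E := [set p : 'S_k.+2 | (p \in @cluster k.+2 tau) && ends_adjacent p].

Lemma E_eq : E = [set pv ta; pv tb].
Proof.
apply/setP => p; rewrite /E in_set in_set2; apply/idP/idP.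
  case/andP => Hp; rewrite ends_eq (@cluster_pv p Hp).
  move: (p ord_max) => v; rewrite pv_max -W0 pv_W /= /bump /=.
  move=> H; suff [->|->] : v = ta \/ v = tb by rewrite eqxx ?orbT.
  move: H; case: leqP => c /= H; [left|right]; apply: val_inj => /=;
    rewrite ?/bump /=; move: c H; case: leqP => /=; lia.
case/orP => /eqP ->; rewrite pv_cluster ends_eq pv_max -W0 pv_W /= /bump /=.
  have := ltn_ord (tau ord0); case: leqP; lia.
have := ltn_ord (tau ord0); case: leqP; lia.
Qed.

Lemma pv_ab : pv ta != pv tb.
Proof.
apply/eqP => /(congr1 (fun q : 'S_k.+2 => val (q ord_max))); rewrite !pv_max /= /bump /=; lia.
Qed.

Lemma card_E : #|E| = 2.
Proof. by rewrite E_eq cards2 pv_ab. Qed.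

Lemma twin_eq : @twin_pairs_in k.+2 tau = [set E].
Proof.
apply/setP => P; rewrite !inE; apply/idP/eqP.
  case/and3P => /cards2P [x [y [xy ->]]] sub /forall_inP H.
  have /forall_inP H2 := H x (set21 _ _).
  have /and4P [_ _ ax ay] := implyP (H2 y (set22 _ _)) xy.
  apply/eqP; rewrite eqEcard card_E cards2 xy andbT.
  apply/subsetP => q /set2P [] ->; rewrite /E in_set ?ax ?ay andbT;
    apply: (subsetP sub); rewrite !inE eqxx ?orbT //.
move=> ->; rewrite card_E eqxx /=.
apply/andP; split.
  by apply/subsetP => q; rewrite inE => /andP [].
apply/forall_inP => p; rewrite inE => /andP [Hp ap].
apply/forall_inP => s; rewrite inE => /andP [Hs as_]; apply/implyP => ps.
rewrite /twins ps ap as_ andbT /=.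
move: Hp Hs; rewrite !inE => /eqP -> /eqP ->; by rewrite eqxx.
Qed.

End S.

Theorem lemma1 (n : nat) (hn : 2 <= n) (tau : 'S_(n.-1)) :
  #|twin_pairs_in tau| = 1.
Proof.
case: n hn tau => [|[|k]] // _ tau.
by rewrite twin_eq cards1.
Qed.
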